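(* Let $\mathcal{W}=(A,\to,\mathbb{S},\mathsf{f}_{\mathtt{NF}},\mathsf{Aggr})$ be a wARS, let $a\in A$, and let $\mathfrak{T}$ be an $(A,\to)$-reduction tree of finite depth whose root $r$ and some leaf $v_0\neq r$ are both labeled with $a$. Let $t\in S$ satisfy $\bigoplus_{i=1}^{\infty}t=\top$. If $\mathcal{P}_{v_0}(\mathfrak{T})(s)\succcurlyeq s\oplus t$ for all $s\in S$, then $[\![a]\!]=\top$.
   Context: A semiring $\mathbb{S}=(S,\oplus,\odot,\mathbf{0},\mathbf{1})$: $(S,\oplus,\mathbf{0})$ commutative monoid, $(S,\odot,\mathbf{1})$ monoid, $\odot$ distributes over $\oplus$, $\mathbf{0}$ annihilator. Natural order: $s\preccurlyeq t$ iff $s\oplus u=t$ for some $u$. A complete lattice semiring is one where $\preccurlyeq$ is antisymmetric and every subset $T\subseteq S$ has a least upper bound $\bigsqcup T$; $\top=\bigsqcup S$. For an infinite sequence, $\bigoplus_{i=1}^\infty s_i=\bigsqcup\{s_1\oplus\cdots\oplus s_n\mid n\ge1\}$, and similarly for infinite products. $\mathrm{Seq}(X)$: non-empty finite or infinite sequences over $X$. An sARS is $(A,\to)$ with $\to\subseteq A\times\mathrm{Seq}(A)$; $\mathtt{NF}_\to$ is the set of $a$ with no $B$ such that $a\to B$. An $(A,\to)$-reduction tree (RT) is a labeled ordered tree whose nodes $v$ carry labels $a_v\in A$ and whose ordered child sequence $vE$ is either empty or satisfies $a_v\to[a_w\mid w\in vE]$. Aggregators: smallest set containing constants $s\in S$,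 variables $v_1,v_2,\dots$, and $\bigoplus F$, $\bigodot F$ for non-empty finite or infinite sequences $F$ of aggregators; they induce functions by substituting the $i$-th argument for $v_i$. A wARS $(A,\to,\mathbb{S},\mathsf{f}_{\mathtt{NF}},\mathsf{Aggr})$ consists of an sARS, a complete lattice semiring $\mathbb{S}$, a map $\mathsf{f}_{\mathtt{NF}}:\mathtt{NF}_\to\to S$, and for each $a\to B$ an aggregator $\mathsf{Aggr}_{a\to B}$ with variable indices $\le|B|$, viewed as a function $S^{|B|}\to S$. Weight of a finite-depth RT $\mathfrak{T}$ at node $v$: $\mathsf{f}_{\mathtt{NF}}(a_v)$ if $a_v\in\mathtt{NF}_\to$; $\mathbf{0}$ if $v$ is a leaf with $a_v\notin\mathtt{NF}_\to$; $\mathsf{Aggr}_{a_v\to B}[$weights of the children in order$]$ with $B=[a_w\mid w\in vE]$ otherwise; $[\![\mathfrak{T}]\!]$ is the weight at the root. $[\![a]\!]=\bigsqcup\{[\![\mathfrak{T}]\!]\mid\mathfrak{T}$ a finite-depth RT with root labeled $a\}$. Induced weight polynomial: for a finite-depth RT $\mathfrak{T}$ with a leaf $v_0$ and a variable $X$, define $[\![\mathfrak{T}]\!]^{v_0}_{v_0}=X$; for $v\neq v_0$ with $a_v\in\mathtt{NF}_\to$, $[\![\mathfrak{T}]\!]^{v_0}_v=\mathsf{f}_{\mathtt{NF}}(a_v)$; for a leaf $v\neq v_0$ with $a_v\notin\mathtt{NF}_\to$, $[\![\mathfrak{T}]\!]^{v_0}_v=\mathbf{0}$; for an inner node $v$,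 $[\![\mathfrak{T}]\!]^{v_0}_v=\mathsf{Aggr}_{a_v\to B}[[\![\mathfrak{T}]\!]^{v_0}_w\mid w\in vE]$ with $B=[a_w\mid w\in vE]$. Then $\mathcal{P}_{v_0}(\mathfrak{T})=[\![\mathfrak{T}]\!]^{v_0}_r$ (with $r$ the root) is an expression in $X$, and $\mathcal{P}_{v_0}(\mathfrak{T})(s)$ denotes its value when $X$ is replaced by $s\in S$. *)

(* Defs.v *)
From mathcomp Require Import all_boot.
From Stdlib Require Import ClassicalEpsilon.

Set Implicit Arguments.
Unset Strict Implicit.
Unset Printing Implicit Defensive.

(* The natural order is  s <= t  iff  exists u, s + u = t.              *)
(* Every subset has a least upper bound [sup]; since the natural order  *)
(* is antisymmetric, the lub is unique, so giving it as a field is the  *)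
(* same as asserting its existence.                                     *)
Record CLSemiring := {
  car :> Type;
  sadd : car -> car -> car;
  smul : car -> car -> car;
  szero : car;
  sone : car;
  saddA : forall x y z, sadd x (sadd y z) = sadd (sadd x y) z;
  saddC : forall x y, sadd x y = sadd y x;
  sadd0 : forall x, sadd szero x = x;
  smulA : forall x y z, smul x (smul y z) = smul (smul x y) z;
  smul1l : forall x, smul sone x = x;
  smul1r : forall x, smul x sone = x;
  smulDl : forall x y z, smul (sadd x y) z = sadd (smul x z) (smul y z);
  smulDr : forall x y z, smul x (sadd y z) = sadd (smul x y) (smul x z);
  smul0l : forall x, smul szero x = szero;
  smul0r : forall x, smul x szero = szero;
  ssup : (car -> Prop) -> car;
  snle_antisym : forall x y,
     (exists u, sadd x u = y) -> (exists u, sadd y u = x) -> x = y;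
  ssup_ub : forall (T : car -> Prop) x, T x -> exists u, sadd x u = ssup T;
  ssup_least : forall (T : car -> Prop) y,
     (forall x, T x -> exists u, sadd x u = y) -> exists u, sadd (ssup T) u = y
}.

Definition nle (K : CLSemiring) (s t : K) : Prop := exists u, sadd s u = t.

Definition top (K : CLSemiring) : K := ssup (fun _ : K => True).

(* partial sums / products  g 0 ⊕ ... ⊕ g n  (n+1 terms) *)
Definition psum (K : CLSemiring) (g : nat -> K) (n : nat) : K :=
  foldr (@sadd K) (szero K) [seq g i | i <- iota 0 n.+1].
Definition pprod (K : CLSemiring) (g : nat -> K) (n : nat) : K :=
  foldr (@smul K) (sone K) [seq g i | i <- iota 0 n.+1].

Definition isum (K : CLSemiring) (g : nat -> K) : K :=
  ssup (fun x => exists n, x = psum g n).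
Definition iprod (K : CLSemiring) (g : nat -> K) : K :=
  ssup (fun x => exists n, x = pprod g n).

Definition fsum (K : CLSemiring) n (g : 'I_n.+1 -> K) : K :=
  foldr (@sadd K) (szero K) [seq g i | i <- enum 'I_n.+1].
Definition fprod (K : CLSemiring) n (g : 'I_n.+1 -> K) : K :=
  foldr (@smul K) (sone K) [seq g i | i <- enum 'I_n.+1].

Inductive Seq (X : Type) : Type :=
  | SFin (n : nat) (f : 'I_n.+1 -> X)
  | SInf (f : nat -> X).

(* i (0-based) is a valid position of B, i.e. i+1 <= |B| *)
Definition in_range X (B : Seq X) (i : nat) : Prop :=
  match B with SFin n _ => i < n.+1 | SInf _ => True end.

(* Aggregators.  [AVar i] denotes the variable v_{i+1}.                 *)
Inductive aggr (K : CLSemiring) : Type :=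
  | AConst (s : K)
  | AVar (i : nat)
  | ASum (F : Seq (aggr K))
  | AProd (F : Seq (aggr K)).

Fixpoint aeval (K : CLSemiring) (env : nat -> K) (e : aggr K) : K :=
  match e with
  | AConst s => s
  | AVar i => env i
  | ASum (SFin n f) => fsum (fun i => aeval env (f i))
  | ASum (SInf f) => isum (fun k => aeval env (f k))
  | AProd (SFin n f) => fprod (fun i => aeval env (f i))
  | AProd (SInf f) => iprod (fun k => aeval env (f k))
  end.

Fixpoint vars_ok (K : CLSemiring) (P : nat -> Prop) (e : aggr K) : Prop :=
  match e with
  | AConst _ => True
  | AVar i => P i
  | ASum (SFin n f) => forall i, vars_ok P (f i)
  | ASum (SInf f) => forall k, vars_ok P (f k)
  | AProd (SFin n f) => forall i, vars_ok P (f i)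
  | AProd (SInf f) => forall k, vars_ok P (f k)
  end.

(* [fNF] is given on all of A but only its values on NF are ever used;  *)
(* likewise [Aggr a B] only matters when [step a B].                    *)
Record wARS (K : CLSemiring) := {
  wA : Type;
  step : wA -> Seq wA -> Prop;
  fNF : wA -> K;
  Aggr : wA -> Seq wA -> aggr K;
  Aggr_vars : forall a B, step a B -> vars_ok (in_range B) (Aggr a B)
}.

Definition NF (K : CLSemiring) (W : wARS K) (a : wA W) : Prop :=
  ~ exists B, step a B.

Inductive rtree (A : Type) : Type :=
  | RLeaf (a : A)
  | RNode (a : A) (ch : Seq (rtree A)).

Definition label A (t : rtree A) : A :=
  match t with RLeaf a => a | RNode a _ => a end.

Definition labels A (ch : Seq (rtree A)) : Seq A :=
  match ch with
  | SFin n f => SFin (fun i => label (f i))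
  | SInf f => SInf (fun k => label (f k))
  end.

Fixpoint is_RT (K : CLSemiring) (W : wARS K) (t : rtree (wA W)) : Prop :=
  match t with
  | RLeaf _ => True
  | RNode a ch =>
      step a (labels ch) /\
      match ch with
      | SFin n f => forall i, is_RT (f i)
      | SInf f => forall k, is_RT (f k)
      end
  end.

Fixpoint depth_le A (t : rtree A) (d : nat) : Prop :=
  match t with
  | RLeaf _ => True
  | RNode _ ch =>
      match d with
      | 0 => False
      | d'.+1 =>
          match ch with
          | SFin n f => forall i, depth_le (f i) d'
          | SInf f => forall k, depth_le (f k) d'
          end
      end
  end.

Definition finite_depth A (t : rtree A) : Prop := exists d, depth_le t d.

(* nodes are addressed by paths of (0-based) child indices from the root *)
Definition child A (ch : Seq (rtree A)) (j : nat) : option (rtree A) :=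
  match ch with
  | SFin n f => match insub j with Some i => Some (f i) | None => None end
  | SInf f => Some (f j)
  end.

Fixpoint subtree_at A (p : list nat) (t : rtree A) : option (rtree A) :=
  match p with
  | [::] => Some t
  | j :: q =>
      match t with
      | RLeaf _ => None
      | RNode _ ch =>
          match child ch j with Some c => subtree_at q c | None => None end
      end
  end.

Definition sub_mark (p : option (list nat)) (k : nat) : option (list nat) :=
  match p with
  | Some (j :: q) => if j == k then Some q else None
  | _ => None
  end.

(* Weight of a tree where the leaf at path [p] (if [p = Some _]) gets   *)
(* value [x] instead of its usual weight.                               *)
Fixpoint wtX (K : CLSemiring) (W : wARS K) (x : K) (p : option (list nat))
    (t : rtree (wA W)) : K :=
  match t with
  | RLeaf a =>
      match p with
      | Some [::] => x
      | _ => if excluded_middle_informative (NF a) then fNF a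
             else szero K
      end
  | RNode a ch =>
      aeval
        (match ch with
         | SFin n f => fun k =>
             match insub k with
             | Some i => wtX x (sub_mark p k) (f i)
             | None => szero K
             end
         | SInf f => fun k => wtX x (sub_mark p k) (f k)
         end)
        (Aggr a (labels ch))
  end.

Definition weight (K : CLSemiring) (W : wARS K) (t : rtree (wA W)) : K :=
  wtX (szero K) None t.

(* P_{v0}(T)(s): the induced weight polynomial evaluated at X := s *)
Definition polyval (K : CLSemiring) (W : wARS K) (t : rtree (wA W))
    (v0 : list nat) (s : K) : K :=
  wtX s (Some v0) t.

Definition sem (K : CLSemiring) (W : wARS K) (a : wA W) : K :=
  ssup (fun w => exists t : rtree (wA W),
          [/\ is_RT t, finite_depth t, label t = a & w = weight t]).

(* Main.v *)
Require Import Defs.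
From mathcomp Require Import all_boot.
From Stdlib Require Import FunctionalExtensionality.

Fixpoint rsubst {A : Type} (p : list nat) (U t : rtree A) : rtree A :=
  match p with
  | [::] => U
  | j :: q =>
      match t with
      | RLeaf b => RLeaf b
      | RNode b ch => RNode b
          (match ch with
           | SFin n f => SFin (fun i : 'I_n.+1 => if val i == j then rsubst q U (f i) else f i)
           | SInf f => SInf (fun k => if k == j then rsubst q U (f k) else f k)
           end)
      end
  end.

Section S.
Variables (K : CLSemiring) (W : wARS K).

Fixpoint wtX_none (t : rtree (wA W)) : forall x y : K, wtX x None t = wtX y None t.
Proof.
case: t => [b|b [n f|f]] x y //=.
- f_equal; apply: functional_extensionality => k.
  case: (insub k) => // i; exact: wtX_none.
- f_equal; apply: functional_extensionality => k; exact: wtX_none.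
Qed.

Lemma label_subst (q : list nat) (U c : rtree (wA W)) b :
  subtree_at q c = Some (RLeaf b) -> label U = b -> label (rsubst q U c) = label c.
Proof.
case: q => [|j q] /=; first by case=> -> <-.
by case: c.
Qed.

Lemma label_subst_ne (p : list nat) (X t : rtree (wA W)) :
  p <> [::] -> label (rsubst p X t) = label t.
Proof. by case: p => [//|j q] _; case: t. Qed.

Lemma wt_subst (p : list nat) : forall (t U : rtree (wA W)) b x,
  subtree_at p t = Some (RLeaf b) -> label U = b ->
  wtX x None (rsubst p U t) = wtX (wtX x None U) (Some p) t.
Proof.
elim: p => [|j q IH] t U b x /=.
  by case=> -> _.
case: t => [//|a [n f|f]] /= Hs HU.
- case: insubP Hs => [i _ Hij|] // Hs.
  have Hl : labels (SFin (fun i0 : 'I_n.+1 => if val i0 == j then rsubst q U (f i0) else f i0))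
          = labels (SFin f).
    rewrite /=; f_equal; apply: functional_extensionality => i0.
    case: eqP => // e.
    have -> : i0 = i by apply: val_inj; exact: (etrans e (esym Hij)).
    exact: label_subst Hs HU.
  simpl in Hl; rewrite Hl; f_equal; apply: functional_extensionality => k.
  case: insubP => // i0 _ e0.
  rewrite /sub_mark; case: eqP => e1.
    have Ejk : (j == k) = true by apply/eqP; rewrite -e0 -e1.
    have -> : i0 = i by apply: val_inj; exact: (etrans e1 (esym Hij)).
    rewrite Ejk; exact: IH Hs HU.
  have -> : (j == k) = false by apply/eqP => e2; apply: e1; rewrite e0.
  exact: wtX_none.
- have Hl : labels (SInf (fun k => if k == j then rsubst q U (f k) else f k))
          = labels (SInf f).
    rewrite /=; f_equal; apply: functional_extensionality => k.
    case: eqP => // ->; exact: label_subst Hs HU.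
  simpl in Hl; rewrite Hl; f_equal; apply: functional_extensionality => k.
  rewrite /sub_mark; case: eqP => e1.
    by subst k; rewrite eqxx; exact: IH Hs HU.
  have -> : (j == k) = false by apply/eqP => e2; apply: e1.
  exact: wtX_none.
Qed.

Lemma RT_subst (p : list nat) : forall (t U : rtree (wA W)) b,
  subtree_at p t = Some (RLeaf b) -> label U = b -> is_RT t -> is_RT U ->
  is_RT (rsubst p U t).
Proof.
elim: p => [|j q IH] t U b //=.
case: t => [//|a [n f|f]] /= Hs HU [Hst Hch] HRU.
- case: insubP Hs => [i _ Hij|] // Hs.
  have Hl : labels (SFin (fun i0 : 'I_n.+1 => if val i0 == j then rsubst q U (f i0) else f i0))
          = labels (SFin f).
    rewrite /=; f_equal; apply: functional_extensionality => i0.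
    case: eqP => // e.
    have -> : i0 = i by apply: val_inj; exact: (etrans e (esym Hij)).
    exact: label_subst Hs HU.
  split; first by simpl in Hl; rewrite Hl.
  move=> i0; case: eqP => // e.
  have -> : i0 = i by apply: val_inj; exact: (etrans e (esym Hij)).
  exact: IH Hs HU (Hch i) HRU.
- have Hl : labels (SInf (fun k => if k == j then rsubst q U (f k) else f k))
          = labels (SInf f).
    rewrite /=; f_equal; apply: functional_extensionality => k.
    case: eqP => // ->; exact: label_subst Hs HU.
  split; first by simpl in Hl; rewrite Hl.
  move=> k; case: eqP => // ->.
  exact: IH Hs HU (Hch j) HRU.
Qed.

Fixpoint depth_mono (t : rtree (wA W)) : forall d e, depth_le t d -> d <= e -> depth_le t e.
Proof.
case: t => [b|b [n f|f]] [|d] [|e] //= H Hde.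
- move=> i; exact: depth_mono _ _ _ (H i) Hde.
- move=> k; exact: depth_mono _ _ _ (H k) Hde.
Qed.

Lemma depth_subst (p : list nat) : forall (t U : rtree (wA W)) d e,
  depth_le t d -> depth_le U e -> depth_le (rsubst p U t) (d + e).
Proof.
elim: p => [|j q IH] t U d e /=.
  by move=> _ HU; apply: depth_mono HU _; rewrite leq_addl.
case: t => [//|a [n f|f]] /=; case: d => [//|d] Ht HU /=.
- move=> i; case: eqP => _; first exact: IH.
  apply: depth_mono (Ht i) _; by rewrite leq_addr.
- move=> k; case: eqP => _; first exact: IH.
  apply: depth_mono (Ht k) _; by rewrite leq_addr.
Qed.

Lemma nle_trans (x y z : K) : nle x y -> nle y z -> nle x z.
Proof.
move=> [u Hu] [v Hv]; exists (sadd u v); by rewrite saddA Hu.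
Qed.

Lemma nle_addr (x y s : K) : nle x y -> nle (sadd x s) (sadd y s).
Proof.
move=> [u Hu]; exists u; by rewrite -saddA (saddC s u) saddA Hu.
Qed.

Lemma nle_addl (x s : K) : nle s (sadd x s).
Proof. exists x; by rewrite saddC. Qed.

Lemma map_cst (s : seq nat) (t : K) : [seq t | _ <- s] = nseq (size s) t.
Proof. by elim: s => //= ? ? ->. Qed.

Lemma psumS (t : K) n : psum (fun _ => t) n.+1 = sadd t (psum (fun _ => t) n).
Proof. by rewrite /psum !map_cst !size_iota. Qed.

End S.

Theorem theorem41 (K : CLSemiring) (W : wARS K) (a : wA W)
    (T : rtree (wA W)) (v0 : list nat) (t : K) :
  is_RT T -> finite_depth T -> label T = a ->
  v0 <> [::] -> subtree_at v0 T = Some (RLeaf a) ->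
  isum (fun _ : nat => t) = top K ->
  (forall s : K, nle (sadd s t) (polyval T v0 s)) ->
  sem a = top K.
Proof.
move=> HRT [d Hd] HlT Hv0 Hs Hisum HP.
pose U := fix U (n : nat) := match n with 0 => RLeaf a | m.+1 => rsubst v0 (U m) T end.
have HU : forall n, [/\ is_RT (U n), finite_depth (U n) & label (U n) = a].
  elim=> [|n [IH1 [e IH2] IH3]] /=; first by split => //; exists 0.
  split.
  - exact: RT_subst Hs IH3 HRT IH1.
  - exists (d + e); exact: depth_subst.
  - rewrite -HlT; exact: label_subst_ne.
have Hw : forall n, weight (U n.+1) = polyval T v0 (weight (U n)).
  move=> n; rewrite /weight /polyval /=.
  by apply: wt_subst Hs _; case: (HU n).
have Hge : forall n, nle (psum (fun _ => t) n) (weight (U n.+1)).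
  elim=> [|n IH].
    rewrite Hw; apply: nle_trans (HP _); rewrite /psum /= saddC sadd0.
    exact: nle_addl.
  rewrite Hw psumS saddC; apply: nle_trans (HP _); exact: nle_addr.
have Hsem : forall n, nle (weight (U n.+1)) (sem a).
  move=> n; apply: ssup_ub; exists (U n.+1); case: (HU n.+1) => ? ? ?; by split.
apply: snle_antisym.
- apply: ssup_ub; done.
- rewrite -Hisum; apply: ssup_least => x [n ->].
  exact: nle_trans (Hge n) (Hsem n).
Qed.
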